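(* Let $\mathbb{Y},\mathbb{T}$ be sets, let $\underline{\mathsf{P}}_{Y,\Theta}$ be a coherent lower prevision on the bounded gambles on $\mathbb{Y}\times\mathbb{T}$ with conjugate upper prevision $\overline{\mathsf{P}}_{Y,\Theta}$, and let $y\mapsto(\underline{\Pi}_y,\overline{\Pi}_y)$ be an inferential model. Suppose the IM is valid, i.e., $$\overline{\mathsf{P}}_{Y,\Theta}\bigl(\{(y,\theta):\underline{\Pi}_y(H)>1-\alpha,\ \theta\notin H\}\bigr)\le\alpha\quad\text{for all }H\subseteq\mathbb{T},\ \alpha\in[0,1].$$ Then there is no sure-loss relative to the prior assessments: $\inf_{y\in\mathbb{Y}}\underline{\Pi}_y(H)\le\overline{\mathsf{P}}_\Theta(H)$ for all $H\subseteq\mathbb{T}$, where $\overline{\mathsf{P}}_\Theta(H)=\overline{\mathsf{P}}_{Y,\Theta}(\mathbb{Y}\times H)$.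
   Context: A lower prevision $\underline{\mathsf{P}}$ on the linear space of bounded gambles on a set $\Omega$ is coherent if for all integers $m,K\ge0$ and all bounded gambles $f_0,\dots,f_K$, $\sup_{\omega}\bigl[\sum_{k=1}^K\{f_k(\omega)-\underline{\mathsf{P}}(f_k)\}-m\{f_0(\omega)-\underline{\mathsf{P}}(f_0)\}\bigr]\ge0$; its conjugate upper prevision is $\overline{\mathsf{P}}(f)=-\underline{\mathsf{P}}(-f)$, and for a set $B$, $\underline{\mathsf{P}}(B)=\underline{\mathsf{P}}(1_B)$, $\overline{\mathsf{P}}(B)=\overline{\mathsf{P}}(1_B)$. An inferential model (IM) is a map $y\mapsto(\underline{\Pi}_y,\overline{\Pi}_y)$ assigning to each $y\in\mathbb{Y}$ a coherent lower prevision $\underline{\Pi}_y$ (with conjugate upper prevision $\overline{\Pi}_y$) on bounded gambles on $\mathbb{T}$; $\underline{\Pi}_y(H)=\underline{\Pi}_y(1_H)$ for $H\subseteq\mathbb{T}$. *)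

(* Defs.v *)
From Stdlib Require Import Reals List ClassicalDescription.
Open Scope R_scope.

Definition bounded {Omega : Type} (f : Omega -> R) : Prop :=
  exists M : R, forall w, Rabs (f w) <= M.

(* sup_w g w >= 0   (sup of an empty set is -oo, so this then fails) *)
Definition sup_ge0 {Omega : Type} (g : Omega -> R) : Prop :=
  forall eps : R, 0 < eps -> exists w, - eps < g w.

Definition inf_le {I : Type} (g : I -> R) (c : R) : Prop :=
  forall eps : R, 0 < eps -> exists y, g y < c + eps.

Definition sum1 (K : nat) (g : nat -> R) : R :=
  fold_right Rplus 0 (map g (seq 1 K)).

(* Coherence of a lower prevision P on the bounded gambles on Omega.
   P is given as a map on all functions; only its values on bounded
   gambles matter. *)
Definition coherent {Omega : Type} (P : (Omega -> R) -> R) : Prop :=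
  forall (m K : nat) (f : nat -> Omega -> R),
    (forall k, (k <= K)%nat -> bounded (f k)) ->
    sup_ge0 (fun w => sum1 K (fun k => f k w - P (f k))
                      - INR m * (f 0%nat w - P (f 0%nat))).

Definition upper {Omega : Type} (P : (Omega -> R) -> R) (f : Omega -> R) : R :=
  - P (fun w => - f w).

Definition indicator {Omega : Type} (B : Omega -> Prop) : Omega -> R :=
  fun w => if excluded_middle_informative (B w) then 1 else 0.

Definition is_IM {Y T : Type} (Pi : Y -> (T -> R) -> R) : Prop :=
  forall y, coherent (Pi y).

Definition valid_IM {Y T : Type} (PYT : (Y * T -> R) -> R)
    (Pi : Y -> (T -> R) -> R) : Prop :=
  forall (H : T -> Prop) (alpha : R), 0 <= alpha <= 1 ->
    upper PYT (indicator (fun p : Y * T =>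
       Pi (fst p) (indicator H) > 1 - alpha /\ ~ H (snd p))) <= alpha.

(* Main.v *)
Require Import Defs.
From Stdlib Require Import Reals Lra Classical ClassicalDescription.
Open Scope R_scope.

Definition fsel {Omega : Type} (g1 g2 : Omega -> R) (k : nat) : Omega -> R :=
  match k with 2%nat => g2 | _ => g1 end.

Lemma coh2 {Omega : Type} (P : (Omega -> R) -> R) (g1 g2 : Omega -> R) (c : R) :
  coherent P -> Defs.bounded g1 -> Defs.bounded g2 ->
  (forall w, g1 w + g2 w <= c) -> P g1 + P g2 <= c.
Proof.
  intros HP B1 B2 Hs.
  destruct (Rle_dec (P g1 + P g2) c) as [h|h]; [exact h|].
  exfalso.
  assert (Hb : forall k, (k <= 2)%nat -> Defs.bounded (fsel g1 g2 k)).
  { intros [|[|[|k]]] _; simpl; assumption. }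
  destruct (HP 0%nat 2%nat (fsel g1 g2) Hb (P g1 + P g2 - c)) as [w Hw]; [lra|].
  unfold sum1 in Hw; simpl in Hw. specialize (Hs w). lra.
Qed.

Lemma coh1 {Omega : Type} (P : (Omega -> R) -> R) (g : Omega -> R) (c : R) :
  coherent P -> Defs.bounded g -> (forall w, g w <= c) -> P g <= c.
Proof.
  intros HP B Hs.
  destruct (Rle_dec (P g) c) as [h|h]; [exact h|].
  exfalso.
  destruct (HP 0%nat 1%nat (fun _ => g) (fun _ _ => B) (P g - c)) as [w Hw]; [lra|].
  unfold sum1 in Hw; simpl in Hw. specialize (Hs w). lra.
Qed.

Lemma ind_01 {Omega : Type} (B : Omega -> Prop) w : 0 <= indicator B w <= 1.
Proof. unfold indicator; destruct excluded_middle_informative; lra. Qed.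

Lemma bnd_neg_ind {Omega : Type} (B : Omega -> Prop) :
  Defs.bounded (fun w => - indicator B w).
Proof. exists 1. intro w. pose proof (ind_01 B w). rewrite Rabs_Ropp, Rabs_right; lra. Qed.

Lemma bnd_ind {Omega : Type} (B : Omega -> Prop) : Defs.bounded (indicator B).
Proof. exists 1. intro w. pose proof (ind_01 B w). rewrite Rabs_right; lra. Qed.

Theorem proposition2 (Y T : Type) (PYT : (Y * T -> R) -> R)
  (Pi : Y -> (T -> R) -> R) :
  coherent PYT -> is_IM Pi -> valid_IM PYT Pi ->
  forall H : T -> Prop,
    inf_le (fun y => Pi y (indicator H))
           (upper PYT (indicator (fun p : Y * T => H (snd p)))).
Proof.
  intros HP HIM HV H eps Heps.
  set (U := upper PYT (indicator (fun p : Y * T => H (snd p)))).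
  apply NNPP; intro Hno.
  assert (Hall : forall y, U + eps <= Pi y (indicator H)).
  { intro y. apply Rnot_lt_le. intro h. apply Hno. exists y. exact h. }
  assert (B0 : forall k : nat, (k <= 0)%nat -> Defs.bounded (fun _ : Y * T => 0)).
  { intros k _. exists 0. intro w. rewrite Rabs_R0. lra. }
  destruct (HP 0%nat 0%nat (fun _ _ => 0) B0 1) as [[y0 t0] _]; [lra|].
  assert (Hle1 : Pi y0 (indicator H) <= 1).
  { apply coh1; [apply HIM | apply bnd_ind | intro w; apply ind_01]. }
  assert (HU0 : 0 <= U).
  { unfold U, upper.
    assert (PYT (fun w => - indicator (fun p : Y * T => H (snd p)) w) <= 0).
    { apply coh1; [exact HP | apply bnd_neg_ind | intro w; pose proof (ind_01 (fun p : Y * T => H (snd p)) w); lra]. }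
    lra. }
  pose proof (Hall y0) as Hy0.
  set (alpha := 1 - U - eps / 2).
  assert (Ha : 0 <= alpha <= 1) by (unfold alpha; lra).
  pose proof (HV H alpha Ha) as Hv. unfold upper in Hv.
  set (V := fun p : Y * T => Pi (fst p) (indicator H) > 1 - alpha /\ ~ H (snd p)) in Hv.
  assert (Hsum : PYT (fun w => - indicator (fun p : Y * T => H (snd p)) w)
               + PYT (fun w => - indicator V w) <= -1).
  { apply coh2; [exact HP | apply bnd_neg_ind | apply bnd_neg_ind |].
    intros [y t]. unfold indicator, V; simpl.
    pose proof (Hall y).
    destruct excluded_middle_informative as [h1|h1];
    destruct excluded_middle_informative as [h2|h2]; try lra;
    try (destruct h2 as [_ h2]; contradiction);
    try (exfalso; apply h2; split; [unfold alpha; simpl; lra | exact h1]). }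
  unfold U, upper in *. unfold alpha in *. lra.
Qed.
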